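(* Let $S$ be an infinite set, $\mathcal{F}\subseteq 2^S$ nontrivial, and $C,A\subseteq S$ with $A$ infinite and $A\cap C=\emptyset$. Then the following are equivalent: (i) $A\in\mathit{ccore}_1(C,\mathcal{F})$; (ii) $A\notin\mathit{cclass}_1(C,\mathcal{F})$ and $A\in\mathit{ccohesive}(S\setminus C,\mathcal{F})$.
   Context: $\mathcal{F}$ is nontrivial if $\emptyset,S\in\mathcal{F}$ and for all $Q\in\mathcal{F}$ and finite $E\subseteq S$ both $Q\cup E\in\mathcal{F}$ and $Q\setminus E\in\mathcal{F}$. For $C\subseteq S$ and an infinite $A\subseteq S\setminus C$: $A\in\mathit{cclass}_1(C,\mathcal{F})$ iff there is $Q\in\mathcal{F}$ with $S\setminus Q\in\mathcal{F}$, $C\subseteq Q$ and $A\subseteq S\setminus Q$; $A\in\mathit{ccore}_1(C,\mathcal{F})$ iff every infinite $A'\subseteq A$ satisfies $A'\notin\mathit{cclass}_1(C,\mathcal{F})$. For $D\subseteq S$, $A\in\mathit{ccohesive}(D,\mathcal{F})$ iff $A$ is infinite and for every $Q\subseteq D$ with $Q\in\mathcal{F}$ and $S\setminus Q\in\mathcal{F}$, either $A\cap Q$ or $A\setminus Q$ is finite. *)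

(* Defs.v *)
From Stdlib Require Import List.

Definition subset (S : Type) := S -> Prop.

Definition incl {S : Type} (A B : subset S) : Prop := forall x, A x -> B x.
Definition seteq {S : Type} (A B : subset S) : Prop := forall x, A x <-> B x.
Definition setU {S : Type} (A B : subset S) : subset S := fun x => A x \/ B x.
Definition setD {S : Type} (A B : subset S) : subset S := fun x => A x /\ ~ B x.
Definition setI {S : Type} (A B : subset S) : subset S := fun x => A x /\ B x.
Definition setT {S : Type} : subset S := fun _ => True.
Definition set0 {S : Type} : subset S := fun _ => False.
Definition setC {S : Type} (A : subset S) : subset S := setD setT A.

Definition finite {S : Type} (A : subset S) : Prop :=
  exists l : list S, forall x, A x -> In x l.
Definition infinite {S : Type} (A : subset S) : Prop := ~ finite A.

(* A family of subsets of S; since subsets are predicates we require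
   the family to be closed under extensional equality of sets. *)
Definition family (S : Type) := subset S -> Prop.
Definition ext_family {S : Type} (F : family S) : Prop :=
  forall Q Q', seteq Q Q' -> F Q -> F Q'.

Definition nontrivial {S : Type} (F : family S) : Prop :=
  F set0 /\ F setT /\
  forall Q E, F Q -> finite E -> F (setU Q E) /\ F (setD Q E).

Definition cclass1 {S : Type} (C : subset S) (F : family S) (A : subset S) : Prop :=
  infinite A /\ incl A (setC C) /\
  exists Q, F Q /\ F (setC Q) /\ incl C Q /\ incl A (setC Q).

Definition ccore1 {S : Type} (C : subset S) (F : family S) (A : subset S) : Prop :=
  infinite A /\ incl A (setC C) /\
  forall A', incl A' A -> infinite A' -> ~ cclass1 C F A'.

Definition ccohesive {S : Type} (D : subset S) (F : family S) (A : subset S) : Prop :=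
  infinite A /\
  forall Q, incl Q D -> F Q -> F (setC Q) ->
    finite (setI A Q) \/ finite (setD A Q).

(* Main.v *)
Require Import Defs.
From Stdlib Require Import Classical.

Theorem lemma4p3 (S : Type) (F : family S) (C A : subset S) :
  infinite (@setT S) ->
  ext_family F ->
  nontrivial F ->
  infinite A ->
  (forall x, ~ (A x /\ C x)) ->
  (ccore1 C F A <->
   (~ cclass1 C F A /\ ccohesive (setC C) F A)).
Proof.
  intros _ Hext [_ [_ Hnt]] HA Hdis.
  assert (HAC : incl A (setC C)).
  { intros x Hx. split; [exact I|]. intros Hc. exact (Hdis x (conj Hx Hc)). }
  assert (HCC : forall Q, F Q -> F (setC (setC Q))).
  { intros Q HQ. apply (Hext Q); [|exact HQ].
    intros x; unfold setC, setD, setT; split; [tauto|].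
    intros [_ H]. apply NNPP. tauto. }
  split.
  - intros [_ [_ Hcore]]. split.
    + apply Hcore; [intros x Hx; exact Hx | exact HA].
    + split; [exact HA|]. intros Q HQD HQ HCQ.
      destruct (classic (finite (setI A Q))) as [H|H]; [left; exact H|].
      right. exfalso. apply (Hcore (setI A Q)); [intros x [Hx _]; exact Hx| exact H|].
      split; [exact H|]. split; [intros x [Hx _]; apply HAC; exact Hx|].
      exists (setC Q). split; [exact HCQ|]. split; [apply HCC; exact HQ|].
      split.
      * intros x Hx. split; [exact I|]. intros Hq. destruct (HQD x Hq) as [_ Hn]. exact (Hn Hx).
      * intros x [_ Hq]. split; [exact I|]. intros [_ Hn]. exact (Hn Hq).
  - intros [Hncl [_ Hcoh]]. split; [exact HA|]. split; [exact HAC|].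
    intros A' HA'A HA'inf [_ [_ [Q [HQ [HCQ [HCsub HA'Q]]]]]].
    destruct (Hcoh (setC Q)) as [Hf|Hf].
    + intros x Hx. split; [exact I|]. intros Hc. destruct Hx as [_ Hn]. exact (Hn (HCsub x Hc)).
    + exact HCQ.
    + apply HCC; exact HQ.
    + apply HA'inf. destruct Hf as [l Hl]. exists l. intros x Hx.
      apply Hl. split; [apply HA'A; exact Hx| apply HA'Q; exact Hx].
    + set (E := setD A (setC Q)) in *.
      apply Hncl. split; [exact HA|]. split; [exact HAC|].
      destruct (Hnt Q E HQ Hf) as [_ HQE].
      destruct (Hnt (setC Q) E HCQ Hf) as [HQE2 _].
      exists (setD Q E). split; [exact HQE|]. split.
      * apply (Hext (setU (setC Q) E)); [|exact HQE2].
        intros x; unfold setC, setU, setD, setT, E; split.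
        { intros [[_ H]|[H1 H2]]. { split; [exact I|]. intros [Hq _]. exact (H Hq). } { split; [exact I|]. intros [Hq Hn]. apply Hn. split; [exact H1|exact H2]. } }
        { intros [_ H]. destruct (classic (Q x)) as [Hq|Hq]; [|left; tauto].
          right. apply NNPP. intros Hn. apply H. split; [exact Hq|]. exact Hn. }
      * split.
        { intros x Hc. split; [apply HCsub; exact Hc|]. intros [Ha _]. exact (Hdis x (conj Ha Hc)). }
        { intros x Ha. split; [exact I|]. intros [Hq Hn]. apply Hn. split; [exact Ha|].
          intros [_ Hnq]. exact (Hnq Hq). }
Qed.
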